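(* Let $\mathbb{X},\mathbb{Y}$ be finite-dimensional real Hilbert spaces, $f:\mathbb{X}\to(-\infty,\infty]$ and $g:\mathbb{Y}\to(-\infty,\infty]$ proper, convex and lower semicontinuous, $K:\mathbb{X}\to\mathbb{Y}$ linear, and $h:\mathbb{X}\to\mathbb{R}$ convex, differentiable and locally smooth. Let $(x_n)$, $(\tau_n)$, $(\theta_n)$ be generated by the aEGRPDA algorithm described in the context, and suppose $(x_n)$ is bounded. Then the sequences $(\tau_n)$ and $(\theta_n)$ are bounded below by positive constants.
   Context: $\phi=\frac{1+\sqrt5}{2}$; $K^*$ adjoint of $K$; $\|K\|$ operator norm; $\operatorname{prox}_{\lambda f}(x)=\arg\min_{u}\{f(u)+\frac{1}{2\lambda}\|u-x\|^2\}$. Locally smooth: for every compact $D\subset\mathbb{X}$ there is $L_D>0$ with $\|\nabla h(x)-\nabla h(y)\|\le L_D\|x-y\|$ for all $x,y\in D$. aEGRPDA: choose $x_0\in\mathbb{X}$, $y_0\in\mathbb{Y}$, set $z_0=x_0$; choose $\beta>0$, $\psi\in(1,\phi]$, $\rho=\psi^{-1}+\psi^{-2}$, $\theta_0>0$, $\tau_{\max}>0$, $\tau_0>0$. For $n=1,2,\dots$: $z_n=\frac{\psi-1}{\psi}x_{n-1}+\frac1\psi z_{n-1}$; $x_n=\operatorname{prox}_{\tau_{n-1}f}\big(z_n-\tau_{n-1}K^*y_{n-1}-\tau_{n-1}\nabla h(x_{n-1})\big)$; $\tau_n=\min\left\{\rho\tau_{n-1},\ \frac{\psi\theta_{n-1}}{9(\bar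 L_n^2+\beta\psi\|K\|^2)}\frac{1}{\tau_{n-1}},\ \tau_{\max}\right\}$ where $\bar L_n=\frac{\|\nabla h(x_n)-\nabla h(x_{n-1})\|}{\|x_n-x_{n-1}\|}$ (if $x_n=x_{n-1}$, then $\tau_n=\min\{\rho\tau_{n-1},\tau_{\max}\}$; a zero denominator is read as $+\infty$); $\sigma_n=\beta\tau_n$; $w_n=\operatorname{prox}_{\frac1{\sigma_n}g}\big(\frac{y_{n-1}}{\sigma_n}+Kx_n\big)$; $y_n=y_{n-1}+\sigma_n(Kx_n-w_n)$; $\theta_n=\frac{\psi\tau_n}{\tau_{n-1}}$. *)

(* Defs.v *)
(* Finite-dimensional real Hilbert spaces are modelled
   as Euclidean column-vector spaces 'cV[R]_m with the standard inner product. *)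
From HB Require Import structures.
From mathcomp Require Import all_boot all_order all_algebra.
From mathcomp Require Import all_classical all_reals all_analysis.
Set Implicit Arguments. Unset Strict Implicit. Unset Printing Implicit Defensive.
Import Order.TTheory GRing.Theory Num.Theory.
Import numFieldNormedType.Exports.
Local Open Scope classical_set_scope.
Local Open Scope ring_scope.

Section Defs.
Variable R : realType.

Definition dotv (m : nat) (u v : 'cV[R]_m) : R := (u^T *m v) 0 0.
Definition enorm (m : nat) (u : 'cV[R]_m) : R := Num.sqrt (dotv u u).

(* operator norm of a linear map K : R^m -> R^p (represented by a matrix,
   acting as x |-> K *m x); its adjoint is the transpose K^T *)
Definition opnorm (p m : nat) (K : 'M[R]_(p, m)) : R :=
  sup [set enorm (K *m x) | x in [set x : 'cV[R]_m | enorm x <= 1]].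

Definition golden : R := (1 + Num.sqrt 5) / 2.

Definition proper_fun (m : nat) (f : 'cV[R]_m -> \bar R) : Prop :=
  (exists x, f x < +oo)%E /\ (forall x, -oo < f x)%E.

Definition convex_efun (m : nat) (f : 'cV[R]_m -> \bar R) : Prop :=
  forall (x y : 'cV[R]_m) (t : R), 0 <= t <= 1 ->
    (f (t *: x + (1 - t) *: y)%R <= t%:E * f x + (1 - t)%:E * f y)%E.

Definition convex_rfun (m : nat) (h : 'cV[R]_m -> R) : Prop :=
  forall (x y : 'cV[R]_m) (t : R), 0 <= t <= 1 ->
    h (t *: x + (1 - t) *: y) <= t * h x + (1 - t) * h y.

Definition is_gradient (m : nat) (h : 'cV[R]_m -> R) (gradh : 'cV[R]_m -> 'cV[R]_m) : Prop :=
  forall x, differentiable h x /\ forall v, 'd h x v = dotv (gradh x) v.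

Definition locally_smooth (m : nat) (gradh : 'cV[R]_m -> 'cV[R]_m) : Prop :=
  forall D : set 'cV[R]_m, compact D ->
    exists2 L : R, 0 < L &
      forall x y, D x -> D y -> enorm (gradh x - gradh y) <= L * enorm (x - y).

Definition is_prox (m : nat) (lam : R) (f : 'cV[R]_m -> \bar R) (x p : 'cV[R]_m) : Prop :=
  forall u, (f p + (enorm (p - x)%R ^+ 2 / (2 * lam))%:E
             <= f u + (enorm (u - x)%R ^+ 2 / (2 * lam))%:E)%E.

End Defs.

(* Main.v *)
Require Import Defs.
From HB Require Import structures.
From mathcomp Require Import all_boot all_order all_algebra.
From mathcomp Require Import all_classical all_reals all_analysis.
From mathcomp Require Import ring lra.
Import Order.TTheory GRing.Theory Num.Theory.
Import numFieldNormedType.Exports.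
Local Open Scope classical_set_scope.
Local Open Scope ring_scope.

Lemma trmx_cont (R : realType) m : continuous (@trmx R 1 m).
Proof.
move=> u A /nbhs_ballP[e /= e0 eA].
apply/nbhs_ballP; exists e => //= v [_ uv]; apply: eA; split => // i j.
by rewrite !mxE; apply: uv.
Qed.

Lemma enorm_ge0 (R : realType) m (x : 'cV[R]_m) : 0 <= enorm x.
Proof. exact: sqrtr_ge0. Qed.

Lemma entry_le (R : realType) m (x : 'cV[R]_m) i : `|x i 0| <= enorm x.
Proof.
have E : dotv x x = \sum_k x k 0 ^+ 2.
  by rewrite /dotv mxE; apply: eq_bigr => k _; rewrite mxE expr2.
rewrite /enorm E -sqrtr_sqr ler_sqrt; last by apply: sumr_ge0 => k _; exact: sqr_ge0.
rewrite (bigD1 i) //= lerDl; apply: sumr_ge0 => k _; exact: sqr_ge0.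
Qed.

Lemma bounded_compact (R : realType) m (M : R) :
  compact [set x : 'cV[R]_m | forall i, `|x i 0| <= M].
Proof.
have -> : [set x : 'cV[R]_m | forall i, `|x i 0| <= M] =
  (@trmx R 1 m) @` [set v : 'rV[R]_m | forall i, `[-M, M]%classic (v ord0 i)].
  apply/seteqP; split => x /=.
    move=> H; exists x^T; last by rewrite trmxK.
    by move=> i; rewrite /= in_itv /= -ler_norml mxE; apply: H.
  move=> [v Hv <-] i; rewrite mxE ler_norml.
  by have := Hv i; rewrite /= in_itv /= => /andP[-> ->].
have := @continuous_compact _ _ (@trmx R 1 m) [set v : 'rV[R]_m | forall i, `[-M, M]%classic (v ord0 i)].
apply.
  by apply: continuous_subspaceT => v; apply: trmx_cont.
by apply: (@rV_compact _ _ (fun=> `[-M, M]%classic)) => i; exact: segment_compact.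
Qed.

Theorem proposition5p1 (R : realType) (m p : nat)
  (f : 'cV[R]_m -> \bar R) (g : 'cV[R]_p -> \bar R)
  (K : 'M[R]_(p, m)) (h : 'cV[R]_m -> R) (gradh : 'cV[R]_m -> 'cV[R]_m)
  (beta psi rho theta0 taumax tau0 : R)
  (x z : nat -> 'cV[R]_m) (y w : nat -> 'cV[R]_p) (tau sigma theta : nat -> R) :
  proper_fun f -> convex_efun f -> lower_semicontinuous f ->
  proper_fun g -> convex_efun g -> lower_semicontinuous g ->
  convex_rfun h -> is_gradient h gradh -> locally_smooth gradh ->
  0 < beta -> 1 < psi -> psi <= golden R -> rho = psi^-1 + psi^-2 ->
  0 < theta0 -> 0 < taumax -> 0 < tau0 ->
  z 0%N = x 0%N -> theta 0%N = theta0 -> tau 0%N = tau0 ->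
  (forall n, z n.+1 = ((psi - 1) / psi) *: x n + psi^-1 *: z n) ->
  (forall n, is_prox (tau n) f
       (z n.+1 - tau n *: (K^T *m y n) - tau n *: gradh (x n)) (x n.+1)) ->
  (forall n,
     let Lbar := enorm (gradh (x n.+1) - gradh (x n)) / enorm (x n.+1 - x n) in
     let den := 9 * (Lbar ^+ 2 + beta * psi * opnorm K ^+ 2) in
     tau n.+1 =
       if (x n.+1 == x n) || (den == 0)
       then Num.min (rho * tau n) taumax
       else Num.min (Num.min (rho * tau n) (psi * theta n / den / tau n)) taumax) ->
  (forall n, sigma n.+1 = beta * tau n.+1) ->
  (forall n, is_prox (sigma n.+1)^-1 g ((sigma n.+1)^-1 *: y n + K *m x n.+1) (w n.+1)) ->
  (forall n, y n.+1 = y n + sigma n.+1 *: (K *m x n.+1 - w n.+1)) ->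
  (forall n, theta n.+1 = psi * tau n.+1 / tau n) ->
  (exists M : R, forall n, enorm (x n) <= M) ->
  (exists2 c : R, 0 < c & forall n, c <= tau n) /\
  (exists2 c : R, 0 < c & forall n, c <= theta n).
Proof.
move=> _ _ _ _ _ _ _ _ Hls Hbeta Hpsi1 Hpsig Hrho Hth0 Htmax Ht0 _ Htheta0 Htau0
  _ _ Htau _ _ _ Htheta [M HM].
have [L L0 HL] := Hls _ (@bounded_compact R m M).
have xD : forall n i, `|x n i 0| <= M.
  by move=> n i; apply: le_trans (@entry_le R m (x n) i) (HM n).
pose Lb n := enorm (gradh (x n.+1) - gradh (x n)) / enorm (x n.+1 - x n).
pose den n := 9 * (Lb n ^+ 2 + beta * psi * opnorm K ^+ 2).
have Htau' : forall n, tau n.+1 =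
       if (x n.+1 == x n) || (den n == 0)
       then Num.min (rho * tau n) taumax
       else Num.min (Num.min (rho * tau n) (psi * theta n / den n / tau n)) taumax.
  exact: Htau.
clear Htau.
set op := opnorm K in den Htau'.
pose Dn := 9 * (L ^+ 2 + beta * psi * op ^+ 2).
have op2 : 0 <= op ^+ 2 by apply: sqr_ge0.
have bpo : 0 <= beta * psi * op ^+ 2.
  by apply: mulr_ge0 => //; apply: mulr_ge0; lra.
have L2 : 0 < L ^+ 2 by apply: exprn_gt0.
have Dn0 : 0 < Dn by rewrite /Dn; lra.
have Lb_b : forall n, 0 <= Lb n <= L.
  move=> n; rewrite /Lb.
  have e0 := @enorm_ge0 R m (x n.+1 - x n).
  have [->|en] := eqVneq (enorm (x n.+1 - x n)) 0.
    by rewrite invr0 mulr0 lexx ltW.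
  have ep : 0 < enorm (x n.+1 - x n) by rewrite lt_def en e0.
  rewrite divr_ge0 ?enorm_ge0 //= ler_pdivrMr //.
  exact: HL.
have den_b : forall n, 0 <= den n <= Dn.
  move=> n; have := Lb_b n; rewrite /den /Dn => /andP[l1 l2].
  apply/andP; split; nra.
have s0 : 0 <= Num.sqrt (5 : R) by apply: sqrtr_ge0.
have s5 : Num.sqrt (5 : R) ^+ 2 = 5 by rewrite sqr_sqrtr.
have rho1 : 1 <= rho.
  have pp : psi ^+ 2 <= psi + 1.
    move: Hpsig; rewrite /golden => Hg.
    set s := Num.sqrt 5 in s0 s5 Hg; nra.
  have -> : rho = (psi + 1) / psi ^+ 2.
    rewrite Hrho; field; lra.
  rewrite ler_pdivlMr; first by lra.
  by apply: exprn_gt0; lra.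
pose T := Num.max tau0 taumax.
have T0 : 0 < T by rewrite lt_max Ht0.
have Tm : taumax <= T by rewrite le_max lexx orbT.
have T1 : tau0 <= T by rewrite le_max lexx.
pose c := Num.min (Num.min tau0 taumax) (Num.min (psi * theta0 / Dn / tau0) (psi ^+ 2 / (Dn * T))).
have c0 : 0 < c.
  rewrite !lt_min Ht0 Htmax /=; apply/andP; split.
    apply: divr_gt0 => //; apply: divr_gt0 => //; apply: mulr_gt0 => //; lra.
  apply: divr_gt0; first by apply: exprn_gt0; lra.
  exact: mulr_gt0.
have c1 : c <= tau0 by rewrite !ge_min lexx.
have c2 : c <= taumax by rewrite !ge_min lexx orbT.
have c3 : c <= psi * theta0 / Dn / tau0 by rewrite !ge_min lexx !orbT.
have c4 : c <= psi ^+ 2 / (Dn * T) by rewrite !ge_min lexx !orbT.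
have one_le : forall Y Z : R, 0 < Z -> Z <= Y -> 1 <= Y / Z.
  by move=> Y Z Z0 ZY; rewrite ler_pdivlMr // mul1r.
have inv : forall n, (c <= tau n <= T) /\ c <= psi * theta n / Dn / tau n.
  elim=> [|n [/andP[Hl Hu] Hs]].
    by rewrite Htau0 Htheta0 c1 T1.
  have tn0 : 0 < tau n by apply: lt_le_trans c0 Hl.
  have Q : c <= tau n.+1 <= T.
    rewrite Htau'; apply/andP; split; last first.
      by case: ifP => _; rewrite ge_min; apply/orP; right.
    have r1 : c <= rho * tau n by nra.
    case: ifP => Hc; rewrite !le_min ?r1 ?c2 //= andbT.
    move: Hc => /norP[_ dn]; have := den_b n => /andP[d0 d1].
    have dp : 0 < den n by rewrite lt_def dn d0.
    have -> : psi * theta n / den n / tau n =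
              (psi * theta n / Dn / tau n) * (Dn / den n).
      field; apply/and3P; split; lra.
    have := one_le _ _ dp d1; nra.
  split => //; move: Q => /andP[Ql Qu].
  have tn10 : 0 < tau n.+1 by apply: lt_le_trans c0 Ql.
  rewrite Htheta.
  have -> : psi * (psi * tau n.+1 / tau n) / Dn / tau n.+1 =
            psi ^+ 2 / (Dn * T) * (T / tau n).
    field; apply/and3P; split; lra.
  have := one_le _ _ tn0 Hu.
  have : 0 <= psi ^+ 2 / (Dn * T) by apply: ltW; apply: lt_le_trans c4.
  nra.
split; first by exists c => // n; have [/andP[]] := inv n.
exists (Num.min theta0 (psi * c / T)).
  rewrite lt_min Hth0 /=; apply: divr_gt0 => //; apply: mulr_gt0 => //; lra.
case=> [|n]; first by rewrite Htheta0 ge_min lexx.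
rewrite ge_min; apply/orP; right; rewrite Htheta.
have [/andP[l1 u1] _] := inv n.
have [/andP[l2 u2] _] := inv n.+1.
have tn0 : 0 < tau n by apply: lt_le_trans c0 l1.
have -> : psi * tau n.+1 / tau n = (psi * c / T) * (tau n.+1 / c) * (T / tau n).
  field; apply/and3P; split; lra.
have := one_le _ _ tn0 u1; have := one_le _ _ c0 l2.
have : 0 <= psi * c / T.
  apply: divr_ge0; last lra; apply: mulr_ge0; lra.
move: (psi * c / T) (tau n.+1 / c) (T / tau n) => A B C A0 B1 C1.
apply: (le_trans (y := A * B)); first by apply: ler_peMr.
by apply: ler_peMr => //; apply: mulr_ge0 => //; lra.
Qed.
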